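(* Let $T$ be a tree with $p\ge 3$ pendant vertices and let $u_1,u_2,u_3$ be three distinct pendant vertices of $T$. Let $H=\bigcup_{1\le i<j\le 3}P_{u_i,u_j}$ be the minimal subtree of $T$ containing these three vertices. If $m(T,1)\ge p-2$, then $m(H,1)\ge 1$.
   Context: $m(G,\lambda)$ denotes the multiplicity of $\lambda$ as an eigenvalue of the Laplacian matrix $L(G)=D(G)-A(G)$ (zero if not an eigenvalue). A pendant vertex has degree $1$. $P_{r,s}$ is the path in $T$ from $r$ to $s$. *)

(* Defs.v *)
From HB Require Import structures.
From mathcomp Require Import all_boot all_order all_algebra.
Set Implicit Arguments. Unset Strict Implicit. Unset Printing Implicit Defensive.
Import Order.TTheory GRing.Theory Num.Theory.

Definition simple_graph (V : finType) (e : rel V) : Prop :=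
  symmetric e /\ irreflexive e.

Definition deg (V : finType) (e : rel V) (x : V) : nat := #|[set y | e x y]|.

Definition pendant (V : finType) (e : rel V) (x : V) : bool := deg e x == 1%N.

Definition connected_graph (V : finType) (e : rel V) : Prop :=
  forall x y : V, connect e x y.

Definition acyclic (V : finType) (e : rel V) : Prop :=
  forall (x : V) (p : seq V), path e x p -> uniq (x :: p) -> (2 <= size p)%N ->
    ~~ e (last x p) x.

Definition is_tree (V : finType) (e : rel V) : Prop :=
  [/\ simple_graph e, (0 < #|V|)%N, connected_graph e & acyclic e].

(* x lies on the path P_{r,s}: x is a vertex of a simple path from r to s
   (in a tree this path is unique). *)
Definition on_path (V : finType) (e : rel V) (r s x : V) : Prop :=
  exists p : seq V, [/\ path e r p, last r p = s, uniq (r :: p) & x \in r :: p].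

Definition laplacian (V : finType) (e : rel V) : 'M[rat]_#|V| :=
  \matrix_(i, j) (if i == j then ((deg e (enum_val i))%:R)%R
                  else if e (enum_val i) (enum_val j) then (-1)%R else 0%R).

(* m(G, lambda): multiplicity of lambda as an eigenvalue of L(G), i.e. as a
   root of the characteristic polynomial (0 if not an eigenvalue). *)
Definition lap_mult (V : finType) (e : rel V) (lambda : rat) : nat :=
  mup lambda (char_poly (laplacian e)).

Definition num_pendant (V : finType) (e : rel V) : nat := #|[set x | pendant e x]|.

Definition induced (V : finType) (e : rel V) (S : {set V}) : rel {x : V | x \in S} :=
  fun x y => e (val x) (val y).
Arguments induced {V} e S _ _.

(* Main.v *)
From HB Require Import structures.
Require Import Defs.
From mathcomp Require Import all_boot all_order all_algebra.
From mathcomp Require Import zify.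
Set Implicit Arguments. Unset Strict Implicit. Unset Printing Implicit Defensive.
Import Order.TTheory GRing.Theory Num.Theory.

Section LA.
Local Open Scope ring_scope.
Variable F : fieldType.

Lemma char_poly_simil n (P D : 'M[F]_n) : P \in unitmx ->
  char_poly (invmx P *m D *m P) = char_poly D.
Proof.
move=> Pu; rewrite /char_poly /char_poly_mx.
set Q := map_mx polyC P; set Qi := map_mx polyC (invmx P).
have QiQ : Qi *m Q = 1%:M by rewrite -map_mxM mulVmx // map_mx1.
have -> : 'X%:M - map_mx polyC (invmx P *m D *m P) =
   Qi *m ('X%:M - map_mx polyC D) *m Q.
  rewrite !map_mxM -/Qi -/Q mulmxBr mulmxBl; congr (_ - _).
  by rewrite -mulmxA -scalar_mxC mulmxA QiQ mul1mx.
by rewrite !det_mulmx mulrAC -det_mulmx QiQ det1 mul1r.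
Qed.


Lemma char_poly_block k m (A1 : 'M[F]_k) (A2 : 'M[F]_m) :
  char_poly (block_mx A1 0 0 A2) = char_poly A1 * char_poly A2.
Proof.
rewrite /char_poly /char_poly_mx map_block_mx !map_mx0 (scalar_mx_block k m).
by rewrite opp_block_mx add_block_mx !oppr0 !addr0 det_ublock.
Qed.

Lemma char_poly_scalar k (a : F) : char_poly (a%:M : 'M_k) = ('X - a%:P) ^+ k.
Proof.
rewrite char_poly_trig ?scalar_mx_is_trig //.
under eq_bigr => i _ do rewrite mxE eqxx /=.
by rewrite prodr_const card_ord.
Qed.

Lemma char_poly_key n k m (hn : (k + m)%N = n) (A : 'M[F]_n) (B : 'M_(k, n))
  (C : 'M_(m, n)) (M : 'M_m) (a : F) :
  row_full (col_mx B C) -> B *m A = a *: B -> C *m A = M *m C ->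
  char_poly A = ('X - a%:P) ^+ k * char_poly M.
Proof.
subst n => Pf BA CA; set P := col_mx B C.
have Pu : P \in unitmx by rewrite -row_full_unit.
have PA : P *m A = block_mx a%:M 0 0 M *m P.
  by rewrite mul_col_mx mul_block_col !mul0mx addr0 add0r mul_scalar_mx BA CA.
have -> : A = invmx P *m block_mx a%:M 0 0 M *m P.
  by rewrite -mulmxA -PA mulKmx.
by rewrite char_poly_simil // char_poly_block char_poly_scalar.
Qed.

End LA.

Section Sym.
Local Open Scope ring_scope.
Variable F : realFieldType.

Lemma rowV_self0 n (v : 'rV[F]_n) : v *m v^T = 0 -> v = 0.
Proof.
move=> /matrixP/(_ 0 0); rewrite !mxE.
under eq_bigr => j _ do rewrite [v^T _ _]mxE.
move=> h; apply/rowP => i; rewrite mxE.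
have hp : forall j, xpredT j -> 0 <= v 0 j * v 0 j.
  by move=> j _; rewrite -expr2 sqr_ge0.
have := (@psumr_eq0P _ _ xpredT (fun j => v 0 j * v 0 j) hp h i isT).
by move/eqP; rewrite mulf_eq0 orbb => /eqP.
Qed.

Lemma mup_le_eigen n (A : 'M[F]_n) (a : F) : A^T = A ->
  (mup a (char_poly A) <= \rank (eigenspace A a))%N.
Proof.
move=> Asym.
set E := eigenspace A a; set B := row_base E; set W := kermx B^T.
set C := row_base W.
have BE : (B <= E)%MS by rewrite eq_row_base.
have hBA : B *m A = a *: B.
  move/sub_kermxP: BE; rewrite mulmxBr mul_mx_scalar => /eqP.
  by rewrite subr_eq0 => /eqP.
have hortho : forall v : 'rV_n, (v <= B)%MS -> (v <= W)%MS -> v = 0.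
  move=> v /submxP [y ->] /sub_kermxP hW; apply: rowV_self0.
  by rewrite trmx_mul mulmxA hW mul0mx.
have CW : (C :=: W)%MS by apply: eq_row_base.
have hCA : (C *m A <= C)%MS.
  rewrite CW; apply/sub_kermxP.
  rewrite -mulmxA -{1}Asym -trmx_mul hBA linearZ /= -scalemxAr.
  have CsW : (C <= W)%MS by rewrite CW.
  by move/sub_kermxP: CsW => ->; rewrite scaler0.
set M := C *m A *m pinvmx C.
have hCM : C *m A = M *m C by rewrite mulmxKpV.
have rB : \rank B = \rank E by rewrite eq_row_base.
have rW : \rank W = (n - \rank E)%N by rewrite mxrank_ker mxrank_tr rB.
have hn : (\rank E + \rank W)%N = n by rewrite rW subnKC // rank_leq_col.
have cap0 : \rank (B :&: C)%MS = 0%N.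
  apply/eqP; rewrite mxrank_eq0; apply/rowV0P => v; rewrite sub_capmx => /andP[vB vC].
  by apply: hortho => //; rewrite -CW.
have Pf : row_full (col_mx B C).
  rewrite /row_full -addsmxE.
  have := mxrank_sum_cap B C; rewrite cap0 addn0 rB CW => ->.
  by rewrite hn.
rewrite (char_poly_key hn Pf hBA hCM) mupMl ?mup_XsubCX ?eqxx //.
rewrite -eigenvalue_root_char; apply/negP => /eigenvalueP [z zM z0].
have zC0 : z *m C = 0.
  apply: hortho; last by rewrite -CW submxMl.
  rewrite eq_row_base; apply/sub_kermxP.
  by rewrite mulmxBr mul_mx_scalar -mulmxA hCM mulmxA zM scalemxAl subrr.
by move: z0; rewrite -(mulmx_free_eq0 _ (row_base_free W)) zC0 eqxx.
Qed.

End Sym.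

Section Tree.
Variables (V : finType) (e : rel V).
Hypothesis esym : symmetric e.
Hypothesis eirr : irreflexive e.
Hypothesis eacy : forall (x : V) (p : seq V), path e x p -> uniq (x :: p) -> (2 <= size p)%N ->
    ~~ e (last x p) x.

Lemma rev_walk (x : V) p : path e x p -> path e (last x p) (rev (belast x p)).
Proof.
move=> h; rewrite rev_path; apply: sub_path h => a b /=; by rewrite esym.
Qed.

Lemma last_rev_belast (x : V) (p : seq V) : last (last x p) (rev (belast x p)) = x.
Proof.
elim: p x => //= y p IH x; rewrite rev_cons last_rcons //.
Qed.

Lemma path_unique (x : V) p q : path e x p -> uniq (x :: p) -> path e x q -> uniq (x :: q) ->
  last x p = last x q -> p = q.
Proof.
elim: p x q => [|a p IH] x [|b q] //=.
- move=> _ _ _ /and3P[xbq _ _] hx; by rewrite hx mem_last in xbq.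
- move=> _ /and3P[xap _ _] _ _ hx; by rewrite -hx mem_last in xap.
move=> /andP[exa pa] /and3P[xap ap up] /andP[exb pb] /and3P[xbq bq uq] hl.
have [ab0|ab] := eqVneq a b.
  by subst b; rewrite (IH a q) //= ?ap ?bq.
exfalso.
set w := p ++ rev (belast b q).
have pw : path e a w.
  rewrite cat_path pa /= hl; exact: rev_walk.
have lw : last a w = b by rewrite last_cat hl last_rev_belast.
move: lw; case: (shortenP pw) => r pr ur sub lr.
have xw : x \notin w.
  rewrite mem_cat negb_or mem_rev; apply/andP; split.
    by apply: contra xap => h; rewrite inE h orbT.
  by apply/negP => /mem_belast; apply/negP.
have xr : x \notin a :: r.
  rewrite inE negb_or; apply/andP; split.
    by apply: contra xap => /eqP ->; exact: mem_head.
  by apply/negP => /sub; apply/negP.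
have := eacy (x := x) (p := a :: r).
rewrite /= exa pr xr /=; move: ur => /= ->.
move=> /(_ isT isT) h.
have sr : (1 < (size r).+1)%N.
  by case: r {pr sub xr h} lr => [/= ba|//]; rewrite ba eqxx in ab.
by move: (h sr); rewrite lr esym exb.
Qed.


Variable r : V.
Hypothesis conn : forall v, connect e r v.

Lemma ex_rp v : exists p, [&& path e r p, last r p == v & uniq (r :: p)].
Proof.
have /connectP [p pp ->] := conn v.
case: (shortenP pp) => p' pp' up' _; exists p'; by rewrite pp' eqxx up'.
Qed.

Definition rp v := xchoose (ex_rp v).

Lemma rpP v : [/\ path e r (rp v), last r (rp v) = v & uniq (r :: rp v)].
Proof.
by have /and3P[h1 /eqP h2 h3] := xchooseP (ex_rp v); split.
Qed.

Lemma rp_uniq v p : path e r p -> last r p = v -> uniq (r :: p) -> p = rp v.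
Proof.
case: (rpP v) => h1 h2 h3 pp lp up; apply: (path_unique pp up h1 h3).
by rewrite lp h2.
Qed.

Lemma rp_root : rp r = [::].
Proof. by symmetry; apply: rp_uniq. Qed.

Lemma rp_prefix v w : w \in r :: rp v -> exists p2, rp v = rp w ++ p2.
Proof.
move=> wv; case: (rpP v) => h1 _ h3; move: h1 h3.
case/splitPl: wv => p1 p2 lp1 h1 h3.
exists p2; congr (_ ++ _); apply: rp_uniq => //.
  by move: h1; rewrite cat_path => /andP[].
by move: h3; rewrite -cat_cons cat_uniq => /andP[].
Qed.

Lemma rp_size v : (size (rp v) < #|V|)%N.
Proof.
case: (rpP v) => _ _ h3.
by have := card_uniqP h3; move=> /= <-; apply: max_card.
Qed.

Lemma rp_nbr v w : e v w -> rp w = rcons (rp v) w \/ rp v = rcons (rp w) v.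
Proof.
move=> evw.
case: (rpP v) => hv1 hv2 hv3; case: (rpP w) => hw1 hw2 hw3.
have [wv|wv] := boolP (w \in r :: rp v); last first.
  left; symmetry; apply: rp_uniq.
  - by rewrite rcons_path hv1 hv2 evw.
  - by rewrite last_rcons.
  - by rewrite -rcons_cons rcons_uniq wv hv3.
have [vw|vw] := boolP (v \in r :: rp w); last first.
  right; symmetry; apply: rp_uniq.
  - by rewrite rcons_path hw1 hw2 esym evw.
  - by rewrite last_rcons.
  - by rewrite -rcons_cons rcons_uniq vw hw3.
exfalso.
have [p2 e2] := rp_prefix wv; have [p3 e3] := rp_prefix vw.
have : rp v = rp v ++ (p3 ++ p2) by rewrite catA -e3 -e2.
move/(congr1 size); rewrite size_cat -{1}[size (rp v)]addn0 => /eqP.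
rewrite eqn_add2l eq_sym -/(nilp _) cat_nilp => /andP[/nilP p30 _].
move: e3; rewrite p30 cats0 => e3.
have : last r (rp v) = last r (rp w) by rewrite e3.
by rewrite hv2 hw2 => vw0; rewrite vw0 eirr in evw.
Qed.

Lemma rp_parent_uniq v w1 w2 : rp v = rcons (rp w1) v -> rp v = rcons (rp w2) v -> w1 = w2.
Proof.
move=> -> eq0; have h := @rcons_injl _ v _ _ eq0.
by case: (rpP w1) => _ h1 _; case: (rpP w2) => _ h2 _; rewrite -[w1]h1 -[w2]h2 h.
Qed.


Lemma rp_mem w : w \in r :: rp w.
Proof. by case: (rpP w) => _ h _; rewrite -{1}h mem_last. Qed.

Lemma rp_parent v : v != r -> exists p, e p v /\ rp v = rcons (rp p) v.
Proof.
move=> vr; case: (rpP v) => h1 h2 h3.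
move: h1 h2 h3; case/lastP: (rp v) => [/= _ h _|q y]; first by rewrite h eqxx in vr.
rewrite rcons_path last_rcons => /andP[pq eqy] yv; subst y.
rewrite -rcons_cons rcons_uniq => /andP[_ uq].
exists (last r q); split => //; congr rcons; exact: rp_uniq.
Qed.

Lemma nonparent_child v c p : e v c -> rp v = rcons (rp p) v -> c != p ->
  rp c = rcons (rp v) c.
Proof.
move=> evc hp cp; case: (rp_nbr evc) => // h.
by rewrite (rp_parent_uniq h hp) eqxx in cp.
Qed.

Variables u2 u3 : V.
Definition Sr v := (v \in r :: rp u2) || (v \in r :: rp u3).

Lemma Sr_root : Sr r.
Proof. by rewrite /Sr mem_head. Qed.

Lemma Sr_parent v w : Sr v -> rp v = rcons (rp w) v -> Sr w.
Proof.
have key : forall u, v \in r :: rp u -> rp v = rcons (rp w) v -> w \in r :: rp u.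
  move=> u vu hv; have [p2 ep] := rp_prefix vu.
  have wm := rp_mem w; move: wm; rewrite ep hv !inE mem_cat mem_rcons !inE.
  by case/orP => ->; rewrite ?orbT.
by move=> /orP[h|h] hv; apply/orP; [left|right]; apply: key.
Qed.

Lemma child_notS v c : ~~ Sr v -> rp c = rcons (rp v) c -> ~~ Sr c.
Proof. by move=> nv hc; apply: contra nv => sc; apply: Sr_parent hc. Qed.

Lemma Sr_onpath x : Sr x <->
  on_path e r u2 x \/ on_path e r u3 x \/ on_path e u2 u3 x.
Proof.
split.
  case/orP => h; [left|right; left]; [exists (rp u2)|exists (rp u3)];
   by case: (rpP u2) => *; case: (rpP u3) => *; split.
case=> [[p [h1 h2 h3 h4]]|[[p [h1 h2 h3 h4]]|[p [h1 h2 h3 h4]]]].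
- by rewrite /Sr -(rp_uniq h1 h2 h3) h4.
- by rewrite /Sr -(rp_uniq h1 h2 h3) h4 orbT.
case: (rpP u2) => a1 a2 a3; case: (rpP u3) => b1 b2 b3.
set w := rev (belast r (rp u2)) ++ rp u3.
have pw : path e u2 w.
  rewrite cat_path; have := rev_walk a1; rewrite a2 => -> /=.
  by have := last_rev_belast r (rp u2); rewrite a2 => ->.
have lw : last u2 w = u3.
  by rewrite last_cat; have := last_rev_belast r (rp u2); rewrite a2 => ->.
move: lw; case: (shortenP pw) => r' pr ur sub lr.
have pe : p = r' by apply: (path_unique h1 h3 pr ur); rewrite h2 lr.
move: h4; rewrite pe inE => /orP[/eqP ->|/sub].
  by apply/orP; left; rewrite -{1}a2 mem_last.
rewrite mem_cat mem_rev => /orP[/mem_belast h|h]; apply/orP; [left|right] => //.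
by rewrite inE h orbT.
Qed.

Local Open Scope ring_scope.
Variable X : V -> rat.
Hypothesis hX : forall v, \sum_(w | e v w) X w = ((deg e v)%:R - 1) * X v.
Hypothesis hleaf : forall v, deg e v = 1%N -> ~~ Sr v -> X v = 0.

Lemma G1 v : ~~ Sr v -> X v = 0.
Proof.
have main : forall k v, (#|V| <= size (rp v) + k)%N -> ~~ Sr v -> X v = 0.
  elim => [|k IH] {}v.
    by rewrite addn0 => h; have := rp_size v; rewrite ltnNge h.
  move=> hk nS.
  have vr : v != r by apply: contra nS => /eqP ->; apply: Sr_root.
  have [p [epv hp]] := rp_parent vr.
  have [d1|d1] := eqVneq (deg e v) 1%N; first exact: hleaf.
  have pN : p \in [set y | e v y] by rewrite inE esym.
  have : (0 < #|[set y | e v y] :\ p|)%N.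
    move: d1; rewrite /deg (cardsD1 p) pN add1n.
    by case: #|_ :\ p|.
  case/card_gt0P => c; rewrite !inE => /andP[cp evc].
  have hc := nonparent_child evc hp cp.
  have nSc := child_notS nS hc.
  have Xc : X c = 0.
    apply: IH nSc; move: hk; rewrite hc size_rcons addSnnS; exact.
  have := hX c; rewrite Xc mulr0 (bigD1 v) /=; last by rewrite esym.
  rewrite big1 ?addr0 // => w /andP[ecw wv].
  have hw := nonparent_child ecw hc wv.
  apply: IH (child_notS nSc hw).
  rewrite hw size_rcons; move: hk; rewrite hc size_rcons => hk.
  by apply: leq_trans hk _; rewrite addSn !addnS ltnW.
by move=> nS; apply: (main #|V|) => //; rewrite leq_addl.
Qed.

Lemma G2 s c : Sr s -> e s c -> ~~ Sr c -> X s = 0.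
Proof.
move=> Ss esc nSc.
have hc : rp c = rcons (rp s) c.
  case: (rp_nbr esc) => // h; by rewrite (Sr_parent Ss h) in nSc.
have := hX c; rewrite (G1 nSc) mulr0 (bigD1 s) /=; last by rewrite esym.
rewrite big1 ?addr0 // => w /andP[ecw ws].
exact: G1 (child_notS nSc (nonparent_child ecw hc ws)).
Qed.

Lemma G3 s : Sr s ->
  \sum_(w | e s w && Sr w) X w = ((#|[set w | e s w && Sr w]|)%:R - 1) * X s.
Proof.
move=> Ss.
have [/forallP hall|] := boolP [forall w, e s w ==> Sr w].
  have eqs : forall w, (e s w && Sr w) = e s w.
    by move=> w; case esw: (e s w) => //=; have := hall w; rewrite esw.
  rewrite (eq_bigl _ _ eqs) hX /deg; congr ((_%:R - 1) * _).
  by apply: eq_card => w; rewrite !inE eqs.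
rewrite negb_forall => /existsP [c]; rewrite negb_imply => /andP[esc nSc].
rewrite (G2 Ss esc nSc) mulr0.
have := hX s; rewrite (G2 Ss esc nSc) mulr0 (bigID Sr) /=.
by rewrite [X in _ + X]big1 ?addr0 // => w /andP[_ /G1].
Qed.

End Tree.

Section Glue.
Local Open Scope ring_scope.
Variables (U : finType) (f : rel U).
Hypothesis fsym : symmetric f.
Hypothesis firr : irreflexive f.

Definition vfun (x : 'rV[rat]_#|U|) (v : U) := x 0 (enum_rank v).

Lemma lap_row (x : 'rV[rat]_#|U|) v :
  (x *m laplacian f) 0 (enum_rank v) =
  (deg f v)%:R * vfun x v - \sum_(w | f v w) vfun x w.
Proof.
rewrite mxE (reindex (@enum_rank U)) /=; last by apply: onW_bij; exact: enum_rank_bij.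
rewrite (bigD1 v) //= mxE !enum_rankK eqxx mulrC /vfun; congr (_ + _).
rewrite (bigID (fun w => f v w)) /= [X in _ + X]big1 ?addr0; last first.
  move=> w /andP[wv nf]; rewrite mxE !enum_rankK (inj_eq enum_rank_inj).
  by rewrite (negPf wv) fsym (negPf nf) mulr0.
apply: (eq_trans _ (sumrN _ _ _)); apply: eq_big => w.
  by case fw: (f v w); rewrite ?andbT ?andbF //; apply/eqP => wv; rewrite wv firr in fw.
move=> /andP[wv fw]; rewrite mxE !enum_rankK (inj_eq enum_rank_inj) (negPf wv).
by rewrite fsym fw mulrN1.
Qed.

Lemma lap_eigen (x : 'rV[rat]_#|U|) :
  x *m laplacian f = x <->
  forall v, \sum_(w | f v w) vfun x w = ((deg f v)%:R - 1) * vfun x v.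
Proof.
split.
  move=> h v; have := lap_row x v; rewrite h -/(vfun x v) => /eqP.
  by rewrite eq_sym subr_eq addrC -subr_eq mulrBl mul1r => /eqP ->.
move=> h; apply/rowP => j; rewrite -(enum_valK j) lap_row h.
by rewrite mulrBl mul1r opprB addrCA subrr addr0.
Qed.

End Glue.

Theorem mainTheorem12 (V : finType) (e : rel V) (u1 u2 u3 : V) (S : {set V}) :
  is_tree e ->
  (3 <= num_pendant e)%N ->
  pendant e u1 -> pendant e u2 -> pendant e u3 ->
  u1 != u2 -> u1 != u3 -> u2 != u3 ->
  (forall x, x \in S <->
     on_path e u1 u2 x \/ on_path e u1 u3 x \/ on_path e u2 u3 x) ->
  (num_pendant e - 2 <= lap_mult e 1%R)%N ->
  (1 <= lap_mult (induced e S) 1%R)%N.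
Proof.
move=> [[esym eirr] _ conn acy] p3 pu1 pu2 pu3 n12 n13 n23 hS hm.
have conn1 : forall v, connect e u1 v by move=> v; apply: conn.
set Sr0 := Sr conn1 u2 u3.
have hSr : forall v, (v \in S) = Sr0 v.
  move=> v; apply/idP/idP => [/hS h|h]; first by apply/(Sr_onpath esym acy).
  by apply/hS; apply/(Sr_onpath esym acy).
set L := laplacian e.
have Lsym : (L^T)%R = L.
  apply/matrixP => i j; rewrite !mxE eq_sym.
  by case: eqP => [->|_] //; rewrite esym.
have hmup := mup_le_eigen 1%R Lsym.
set E := eigenspace L 1%R.
set P := [set v | pendant e v]; set B := [set u1; u2; u3]; set Lf := P :\: B.
have BP : B \subset P.
  by apply/subsetP => v; rewrite !inE => /orP[/orP[]|] /eqP ->.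
have cardB : #|B| = 3.
  rewrite /B -setUA cardsU1 !inE negb_or n12 n13 cards2 n23 //.
have cardLf : (#|Lf| + 3 = num_pendant e)%N.
  rewrite -cardB /num_pendant -/P -(cardsID B P) (setIidPr BP) addnC //.
set Sel := (\matrix_(i < #|V|, j < #|Lf|) ((enum_val i == enum_val j)%:R : rat))%R.
set K := kermx Sel.
have rk : (0 < \rank (E :&: K))%N.
  have h1 := mxrank_sum_cap E K.
  have h2 : (\rank (E + K) <= #|V|)%N := rank_leq_col _.
  have h3 : \rank K = (#|V| - \rank Sel)%N := mxrank_ker Sel.
  have h4 : (\rank Sel <= #|Lf|)%N := rank_leq_col Sel.
  have h5 : (\rank Sel <= #|V|)%N := rank_leq_row Sel.
  move: hm; rewrite /lap_mult -/L => hm.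
  have h6 : (mup 1%R (char_poly L) <= \rank E)%N := hmup.
  have t0 : (num_pendant e - 2 <= \rank E)%N by apply: leq_trans hm h6.
  have t1 : (#|Lf| < \rank E)%N by lia.
  have t2 : (\rank E + \rank K <= #|V| + \rank (E :&: K))%N by lia.
  lia.
have [x xcap x0] : exists2 x : 'rV_#|V|, (x <= E :&: K)%MS & (x != 0)%R.
  by apply/rowV0Pn; rewrite -mxrank_eq0 -lt0n.
Local Open Scope ring_scope.
move: xcap; rewrite sub_capmx => /andP[xE xK].
have xL : x *m L = x by move/eigenspaceP: xE; rewrite scale1r.
have xSel : (x *m Sel = 0)%R by apply/sub_kermxP.
set X := vfun x.
have hX := proj1 (lap_eigen esym eirr x) xL.
have Xleaf : forall v, v \in Lf -> X v = 0%R.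
  move=> v vL; have := (proj2 (matrixP _ _) xSel) 0 (enum_rank_in vL v).
  rewrite !mxE (reindex (@enum_rank V)) /=; last by apply: onW_bij; exact: enum_rank_bij.
  rewrite (bigD1 v) //= big1 ?addr0.
    by rewrite mxE enum_rankK (enum_rankK_in vL vL) eqxx mulr1.
  move=> w wv; rewrite mxE enum_rankK (enum_rankK_in vL vL) (negPf wv) mulr0 //.
have hleaf : forall v, deg e v = 1%N -> ~~ Sr0 v -> X v = 0%R.
  move=> v dv nS; apply: Xleaf; rewrite !inE /pendant dv eqxx andbT.
  apply: contra nS => /orP[/orP[]|] /eqP ->.
  - exact: Sr_root.
  - by apply/orP; left; apply: rp_mem.
  - by apply/orP; right; apply: rp_mem.
have g1 := @G1 V e esym eirr acy u1 conn1 u2 u3 X hX hleaf.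
have g3 := @G3 V e esym eirr acy u1 conn1 u2 u3 X hX hleaf.
set f := induced e S.
have fsym : symmetric f by move=> a b; rewrite /f /induced esym.
have firr : irreflexive f by move=> a; rewrite /f /induced eirr.
set y : 'rV[rat]_#|{: {x : V | x \in S}}| := \row_j X (val (enum_val j)).
have vy : forall u, vfun y u = X (val u) by move=> u; rewrite /vfun mxE enum_rankK.
have yL : y *m laplacian f = y.
  apply/(lap_eigen fsym firr) => u; rewrite vy.
  under eq_bigr => w _ do rewrite vy.
  have Su : Sr0 (val u) by rewrite -hSr; exact: valP.
  rewrite /f /induced -(big_sub_cond S (fun i => e (val u) i) X).
  have -> : \sum_(i in S | e (val u) i) X i = \sum_(i | e (val u) i && Sr0 i) X i.
    by apply: eq_bigl => i; rewrite hSr andbC.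
  rewrite g3 //; congr ((_%:R - 1) * _).
  rewrite /deg -(card_imset _ val_inj); apply: eq_card => i.
  rewrite inE; apply/idP/imsetP => [/andP[ei si]|[w]].
    have iS : i \in S by rewrite hSr.
    by exists (exist _ i iS); rewrite // inE.
  by rewrite inE => ew ->; have := valP w; rewrite hSr /Sr0 ew => ->.
have y0 : y != 0.
  have [i xi] : exists i, x 0 i != 0.
    apply/existsP; apply: contraNT x0; rewrite negb_exists => /forallP h.
    by apply/eqP/rowP => i; rewrite mxE; apply/eqP; have := h i; rewrite negbK.
  have Xv : X (enum_val i) != 0 by rewrite /X /vfun enum_valK.
  have Sv : Sr0 (enum_val i) by apply: contraR Xv => /g1 ->.
  have vS : enum_val i \in S by rewrite hSr.
  apply: contraNneq Xv => y00.
  by rewrite -[enum_val i]/(val (exist _ (enum_val i) vS)) -vy y00 /vfun mxE.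
have ev : eigenvalue (laplacian f) 1.
  by apply/eigenvalueP; exists y; rewrite ?scale1r.
rewrite /lap_mult -/f -XsubC_dvd ?monic_neq0 ?char_poly_monic //.
by rewrite dvdp_XsubCl -eigenvalue_root_char.
Qed.
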